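(* For every series-parallel digraph $D$, the quantity $\phi(D)$ takes the same value for every binary decomposition tree of $D$.
   Context: A series-parallel digraph with source $s$ and sink $t$ is either a single arc from $s$ to $t$, or a series composition $D'\circ D''$ (identify the sink of $D'$ with the source of $D''$), or a parallel composition $D'\parallel D''$ (identify the two sources and the two sinks) of two series-parallel digraphs; parallel arcs are allowed. A binary decomposition tree of $D$ is a rooted binary tree whose leaves correspond bijectively to the arcs of $D$ and each internal vertex is labeled $S$ or $P$ and represents the series, respectively parallel, composition of the graphs of its two children, the root representing $D$. An $S$-component is a maximal connected set of tree vertices labeled $S$. For a given binary decomposition tree, $\phi(D)$ is defined as the maximum, over all root-to-leaf paths, of the number of distinct $S$-components the path traverses. *)

(* Defs.v *)
From mathcomp Require Import all_boot.
Set Implicit Arguments. Unset Strict Implicit. Unset Printing Implicit Defensive.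

(* A series-parallel digraph D is given concretely by a finite vertex type V,
   a finite arc type E (parallel arcs allowed), endpoint maps tail/head, and a
   source s and sink t. *)

Inductive sptree (E : Type) : Type :=
| Leaf of E
| SNode of sptree E & sptree E
| PNode of sptree E & sptree E.

Arguments Leaf {E}.
Arguments SNode {E}.
Arguments PNode {E}.

Section Trees.
Variables (V E : finType) (tail head : E -> V).

Fixpoint leaves (T : sptree E) : seq E :=
  match T with
  | Leaf e => [:: e]
  | SNode a b => leaves a ++ leaves b
  | PNode a b => leaves a ++ leaves b
  end.

Definition verts (T : sptree E) : seq V :=
  flatten [seq [:: tail e; head e] | e <- leaves T].

(* [realizes T u v]: the arcs of T (with their endpoints in D) form exactly the
   graph obtained by the compositions of T, with source u and sink v:
   - a leaf is a single arc from u to v (u <> v);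
   - a series node glues the graphs of its children, which share only the
     identified vertex (sink of the first = source of the second);
   - a parallel node glues the graphs of its children, which share only the
     common source and sink. *)
Fixpoint realizes (T : sptree E) (u v : V) : Prop :=
  match T with
  | Leaf e => tail e = u /\ head e = v /\ u <> v
  | SNode a b => exists w, realizes a u w /\ realizes b w v /\
      (forall x, x \in verts a -> x \in verts b -> x = w)
  | PNode a b => realizes a u v /\ realizes b u v /\
      (forall x, x \in verts a -> x \in verts b -> x = u \/ x = v)
  end.

Definition is_dtree (s t : V) (T : sptree E) : Prop :=
  perm_eq (leaves T) (enum E) /\ realizes T s t /\ (forall x : V, x \in verts T).

End Trees.

(* For each root-to-leaf path, the sequence of labels of the internal vertices
   traversed, from the root downwards (true = S, false = P). *)
Fixpoint paths (E : Type) (T : sptree E) : seq (seq bool) :=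
  match T with
  | Leaf _ => [:: [::]]
  | SNode a b => [seq true :: p | p <- paths a ++ paths b]
  | PNode a b => [seq false :: p | p <- paths a ++ paths b]
  end.

(* Number of distinct S-components traversed by a downward path with label
   sequence p: the S-vertices on the path split into maximal runs of
   consecutive S-vertices, each run being the intersection of the path with
   one S-component; we count the starts of such runs. [prev] = label of the
   previous vertex (false at the root). *)
Fixpoint ncomp_from (prev : bool) (p : seq bool) : nat :=
  match p with
  | [::] => 0
  | b :: q => (b && ~~ prev) + ncomp_from b q
  end.

Definition ncomp (p : seq bool) : nat := ncomp_from false p.

Definition phi (E : Type) (T : sptree E) : nat := \max_(p <- paths T) ncomp p.

(* Main.v *)
Require Import Defs.
From mathcomp Require Import all_boot.
Set Implicit Arguments. Unset Strict Implicit. Unset Printing Implicit Defensive.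


Fixpoint F (E : Type) (b : bool) (T : sptree E) : nat :=
  match T with
  | Leaf _ => 0
  | SNode a c => (~~ b) + maxn (F true a) (F true c)
  | PNode a c => maxn (F false a) (F false c)
  end.

Lemma paths_nil (E : Type) (T : sptree E) : paths T != [::].
Proof.
rewrite -size_eq0 -lt0n.
by elim: T => [e|a IHa c _|a IHa c _] //=; rewrite size_map size_cat addn_gt0 IHa.
Qed.

Lemma max_add k (h : seq bool -> nat) (s : seq (seq bool)) :
  s != [::] -> \max_(p <- s) (k + h p) = k + \max_(p <- s) h p.
Proof.
elim: s => // x s IH _; rewrite !big_cons.
case: s IH => [|y s] IH; first by rewrite !big_nil !maxn0.
by rewrite IH // addn_maxr.
Qed.

Lemma phiF (E : Type) b (T : sptree E) : \max_(p <- paths T) ncomp_from b p = F b T.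
Proof.
elim: T b => [e|a IHa c IHc|a IHa c IHc] b /=.
- by rewrite big_cons big_nil.
- rewrite big_map /= big_cat /= !max_add ?paths_nil // IHa IHc.
  by rewrite -addn_maxr.
- rewrite big_map /= big_cat /= IHa IHc.
  by [].
Qed.

Lemma size_leaves (E : finType) (T : sptree E) : 0 < size (leaves T).
Proof. by elim: T => //= a IHa c _ ; rewrite size_cat addn_gt0 IHa. Qed.

Section Aux.
Variables (V E : finType) (tail head : E -> V).

Definition vset (s : seq E) : seq V := flatten [seq [:: tail e; head e] | e <- s].

Lemma vset_cat s1 s2 : vset (s1 ++ s2) = vset s1 ++ vset s2.
Proof. by rewrite /vset map_cat flatten_cat. Qed.

Lemma mem_vsetE p s : (p \in vset s) = has (fun e => (p == tail e) || (p == head e)) s.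
Proof. by elim: s => [|e s IH] //=; rewrite /vset /= -/(vset s) !inE IH orbA. Qed.

Lemma mem_vset p s :
  reflect (exists2 e, e \in s & p = tail e \/ p = head e) (p \in vset s).
Proof.
rewrite mem_vsetE; apply: (iffP hasP) => [[e es /orP [] /eqP H]|[e es H]].
- by exists e => //; left.
- by exists e => //; right.
- by exists e => //; case: H => ->; rewrite eqxx ?orbT.
Qed.

Lemma vset_sub s1 s2 : {subset s1 <= s2} -> {subset vset s1 <= vset s2}.
Proof. by move=> H p /mem_vset [e /H es Hp]; apply/mem_vset; exists e. Qed.

Lemma vsetT e s : e \in s -> tail e \in vset s.
Proof. by move=> es; apply/mem_vset; exists e => //; left. Qed.
Lemma vsetH e s : e \in s -> head e \in vset s.
Proof. by move=> es; apply/mem_vset; exists e => //; right. Qed.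

Definition step (X : seq E) : rel V :=
  fun p q => has (fun e => (tail e == p) && (head e == q)) X.
Definition reach X := connect (step X).

Lemma reach_sub X Y p q : {subset X <= Y} -> reach X p q -> reach Y p q.
Proof.
move=> sXY; apply: connect_sub => a b /hasP [e /sXY eY H].
by apply: connect1; apply/hasP; exists e.
Qed.

Lemma reach_arc X e : e \in X -> reach X (tail e) (head e).
Proof. by move=> eX; apply: connect1; apply/hasP; exists e; rewrite ?eqxx. Qed.

Lemma reach_closed X (S : pred V) p q :
  (forall e, e \in X -> S (tail e) -> S (head e)) -> S p -> reach X p q -> S q.
Proof.
move=> cl Sp /connectP [s pth ->]; elim: s p Sp pth => //= x s IH p Sp /andP [st pth].
apply: IH pth; case/hasP: st => e eX /andP [/eqP tp /eqP hx].
by rewrite -hx; apply: cl; rewrite ?tp.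
Qed.

Lemma reach_restr_in X Y (S : pred V) p q :
  (forall e, e \in X -> S (tail e) -> S (head e) /\ e \in Y) -> S p ->
  reach X p q -> reach Y p q.
Proof.
move=> cl Sp /connectP [s pth ->]; elim: s p Sp pth => /= [|x s IH] p Sp.
  by move=> _; apply: connect0.
case/andP=> st pth; case/hasP: st => e eX /andP [/eqP tp /eqP hx].
have [Sh eY] : S (head e) /\ e \in Y by apply: cl; rewrite ?tp.
apply: connect_trans (IH x _ pth); last by rewrite -hx.
by rewrite -tp -hx; apply: reach_arc.
Qed.

Lemma reach_restr_out X Y (S : pred V) p q :
  (forall e, e \in X -> S (tail e) -> S (head e)) ->
  (forall e, e \in X -> ~~ S (tail e) -> e \in Y) -> ~~ S q ->
  reach X p q -> reach Y p q.
Proof.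
move=> cl out Sq /connectP [s pth qe]; elim: s p pth qe => /= [|x s IH] p.
  by move=> _ ->; apply: connect0.
case/andP=> st pth qe; case/hasP: st => e eX /andP [/eqP tp /eqP hx].
have Sp : ~~ S p.
  apply: contra Sq => Sp.
  apply: (reach_closed cl Sp); apply/connectP; exists (x :: s) => //=.
  by rewrite pth andbT; apply/hasP; exists e; rewrite ?tp ?hx ?eqxx.
have eY : e \in Y by apply: (out e eX); rewrite tp.
apply: connect_trans (IH x pth qe).
by rewrite -tp -hx; apply: reach_arc.
Qed.

Lemma reach_eq X Y p q : X =i Y -> reach X p q = reach Y p q.
Proof.
move=> XY; apply/idP/idP; apply: reach_sub => e; by rewrite XY.
Qed.


Notation rz := (realizes tail head).

Lemma leaves_vset T : verts tail head T = vset (leaves T).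
Proof. by []. Qed.

Lemma rz_ends T a b : rz T a b -> a \in vset (leaves T) /\ b \in vset (leaves T).
Proof.
elim: T a b => [e|c IHc d IHd|c IHc d IHd] a b /=.
- by case=> <- [<- _]; rewrite /vset /= !inE !eqxx ?orbT.
- case=> m [/IHc [ac _] [/IHd [_ bd] _]].
  by rewrite vset_cat !mem_cat ac bd orbT.
- case=> [/IHc [ac bc] _]; by rewrite vset_cat !mem_cat ac bc.
Qed.

Lemma rz_neq T a b : rz T a b -> a <> b.
Proof.
elim: T a b => [e|c IHc d IHd|c IHc d IHd] a b /=.
- by case=> _ [_].
- case=> m [rc [rd dj]] ab; subst b.
  have [ac _] := rz_ends rc; have [_ ad] := rz_ends rd.
  by apply: (IHc a m rc); apply: dj.
- by case=> [/IHc].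
Qed.

Lemma rz_noin T a b e : rz T a b -> e \in leaves T -> head e <> a.
Proof.
elim: T a b => [f|c IHc d IHd|c IHc d IHd] a b /=.
- by case=> <- [<- ab]; rewrite inE => /eqP ->; move/esym.
- case=> m [rc [rd dj]]; rewrite mem_cat => /orP [ec|ed]; first exact: IHc rc ec.
  move=> ha; have [ac _] := rz_ends rc.
  have am : a = m by apply: dj => //; rewrite -ha; apply: vsetH.
  by apply: (IHd m b) => //; rewrite ha.
- case=> [rc [rd _]]; rewrite mem_cat => /orP [ec|ed]; [exact: IHc rc ec|exact: IHd rd ed].
Qed.

Lemma rz_noout T a b e : rz T a b -> e \in leaves T -> tail e <> b.
Proof.
elim: T a b => [f|c IHc d IHd|c IHc d IHd] a b /=.
- by case=> <- [<- ab]; rewrite inE => /eqP ->.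
- case=> m [rc [rd dj]]; rewrite mem_cat => /orP [ec|ed]; last exact: IHd rd ed.
  move=> tb; have [_ bd] := rz_ends rd.
  have bm : b = m by apply: dj => //; rewrite -tb; apply: vsetT.
  by apply: (IHc a m) => //; rewrite tb.
- case=> [rc [rd _]]; rewrite mem_cat => /orP [ec|ed]; [exact: IHc rc ec|exact: IHd rd ed].
Qed.

Lemma rz_out T a b : rz T a b -> exists2 e, e \in leaves T & tail e = a.
Proof.
elim: T a b => [f|c IHc d IHd|c IHc d IHd] a b /=.
- by case=> <- _; exists f; rewrite ?inE.
- case=> m [/IHc [e ec <-] _]; by exists e; rewrite // mem_cat ec.
- case=> [/IHc [e ec <-] _]; by exists e; rewrite // mem_cat ec.
Qed.

Lemma rz_in T a b : rz T a b -> exists2 e, e \in leaves T & head e = b.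
Proof.
elim: T a b => [f|c IHc d IHd|c IHc d IHd] a b /=.
- by case=> _ [<- _]; exists f; rewrite ?inE.
- case=> m [_ [/IHd [e ed <-] _]]; by exists e; rewrite // mem_cat ed orbT.
- case=> [/IHc [e ec <-] _]; by exists e; rewrite // mem_cat ec.
Qed.

Lemma rz_reach_sink T a b e : rz T a b -> e \in leaves T -> reach (leaves T) (head e) b.
Proof.
elim: T a b e => [f|c IHc d IHd|c IHc d IHd] a b e /=.
- by case=> _ [<- _]; rewrite inE => /eqP ->; apply: connect0.
- case=> m [rc [rd _]]; rewrite mem_cat => /orP [ec|ed].
    apply: (@connect_trans _ _ m).
      by apply: (reach_sub _ (IHc _ _ _ rc ec)) => x; rewrite mem_cat => ->.
    have [f fd <-] := rz_out rd.
    have fX : f \in leaves c ++ leaves d by rewrite mem_cat fd orbT.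
    apply: (connect_trans (reach_arc fX)).
    by apply: (reach_sub _ (IHd _ _ _ rd fd)) => x; rewrite mem_cat => ->; rewrite orbT.
  by apply: (reach_sub _ (IHd _ _ _ rd ed)) => x; rewrite mem_cat => ->; rewrite orbT.
- case=> [rc [rd _]]; rewrite mem_cat => /orP [ec|ed].
    by apply: (reach_sub _ (IHc _ _ _ rc ec)) => x; rewrite mem_cat => ->.
  by apply: (reach_sub _ (IHd _ _ _ rd ed)) => x; rewrite mem_cat => ->; rewrite orbT.
Qed.

Lemma rz_reach_src T a b e : rz T a b -> e \in leaves T -> reach (leaves T) a (tail e).
Proof.
elim: T a b e => [f|c IHc d IHd|c IHc d IHd] a b e /=.
- by case=> <- _; rewrite inE => /eqP ->; apply: connect0.
- case=> m [rc [rd _]]; rewrite mem_cat => /orP [ec|ed].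
    by apply: (reach_sub _ (IHc _ _ _ rc ec)) => x; rewrite mem_cat => ->.
  apply: (@connect_trans _ _ m).
    have [f fc <-] := rz_in rc.
    have fX : f \in leaves c ++ leaves d by rewrite mem_cat fc.
    apply: (@connect_trans _ _ (tail f)); last exact: (reach_arc fX).
    by apply: (reach_sub _ (IHc _ _ _ rc fc)) => x; rewrite mem_cat => ->.
  by apply: (reach_sub _ (IHd _ _ _ rd ed)) => x; rewrite mem_cat => ->; rewrite orbT.
- case=> [rc [rd _]]; rewrite mem_cat => /orP [ec|ed].
    by apply: (reach_sub _ (IHc _ _ _ rc ec)) => x; rewrite mem_cat => ->.
  by apply: (reach_sub _ (IHd _ _ _ rd ed)) => x; rewrite mem_cat => ->; rewrite orbT.
Qed.


Lemma chain_fwd T a b (Q : pred E) :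
  rz T a b ->
  (forall e1 e2, e1 \in leaves T -> e2 \in leaves T -> head e1 = tail e2 -> Q e1 = Q e2) ->
  forall e, e \in leaves T -> exists2 e', e' \in leaves T & head e' = b /\ Q e' = Q e.
Proof.
elim: T a b => [f|c IHc d IHd|c IHc d IHd] a b /=.
- by case=> _ [<- _] _ e; rewrite inE => /eqP ->; exists f; rewrite ?inE.
- case=> m [rc [rd _]] pr e; rewrite mem_cat => /orP [ec|ed].
    have prc : forall e1 e2, e1 \in leaves c -> e2 \in leaves c -> head e1 = tail e2 -> Q e1 = Q e2.
      by move=> e1 e2 h1 h2; apply: pr; rewrite mem_cat ?h1 ?h2.
    have prd : forall e1 e2, e1 \in leaves d -> e2 \in leaves d -> head e1 = tail e2 -> Q e1 = Q e2.
      by move=> e1 e2 h1 h2; apply: pr; rewrite mem_cat ?h1 ?h2 ?orbT.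
    have [e1 e1c [h1 q1]] := IHc _ _ rc prc e ec.
    have [f fd tf] := rz_out rd.
    have [e2 e2d [h2 q2]] := IHd _ _ rd prd f fd.
    exists e2; first by rewrite mem_cat e2d orbT.
    split=> //; rewrite q2 -q1; apply/esym/pr; rewrite ?mem_cat ?e1c ?fd ?orbT //.
    by rewrite h1 tf.
  have prd : forall e1 e2, e1 \in leaves d -> e2 \in leaves d -> head e1 = tail e2 -> Q e1 = Q e2.
    by move=> e1 e2 h1 h2; apply: pr; rewrite mem_cat ?h1 ?h2 ?orbT.
  have [e2 e2d [h2 q2]] := IHd _ _ rd prd e ed.
  by exists e2; first by rewrite mem_cat e2d orbT.
- case=> [rc [rd _]] pr e; rewrite mem_cat => /orP [ec|ed].
    have prc : forall e1 e2, e1 \in leaves c -> e2 \in leaves c -> head e1 = tail e2 -> Q e1 = Q e2.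
      by move=> e1 e2 h1 h2; apply: pr; rewrite mem_cat ?h1 ?h2.
    have [e1 e1c [h1 q1]] := IHc _ _ rc prc e ec.
    by exists e1; first by rewrite mem_cat e1c.
  have prd : forall e1 e2, e1 \in leaves d -> e2 \in leaves d -> head e1 = tail e2 -> Q e1 = Q e2.
    by move=> e1 e2 h1 h2; apply: pr; rewrite mem_cat ?h1 ?h2 ?orbT.
  have [e2 e2d [h2 q2]] := IHd _ _ rd prd e ed.
  by exists e2; first by rewrite mem_cat e2d orbT.
Qed.

Lemma chain_bwd T a b (Q : pred E) :
  rz T a b ->
  (forall e1 e2, e1 \in leaves T -> e2 \in leaves T -> head e1 = tail e2 -> Q e1 = Q e2) ->
  forall e, e \in leaves T -> exists2 e', e' \in leaves T & tail e' = a /\ Q e' = Q e.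
Proof.
elim: T a b => [f|c IHc d IHd|c IHc d IHd] a b /=.
- by case=> <- _ _ e; rewrite inE => /eqP ->; exists f; rewrite ?inE.
- case=> m [rc [rd _]] pr e; rewrite mem_cat => /orP [ec|ed].
    have prc : forall e1 e2, e1 \in leaves c -> e2 \in leaves c -> head e1 = tail e2 -> Q e1 = Q e2.
      by move=> e1 e2 h1 h2; apply: pr; rewrite mem_cat ?h1 ?h2.
    have [e1 e1c [h1 q1]] := IHc _ _ rc prc e ec.
    by exists e1; first by rewrite mem_cat e1c.
  have prc : forall e1 e2, e1 \in leaves c -> e2 \in leaves c -> head e1 = tail e2 -> Q e1 = Q e2.
    by move=> e1 e2 h1 h2; apply: pr; rewrite mem_cat ?h1 ?h2.
  have prd : forall e1 e2, e1 \in leaves d -> e2 \in leaves d -> head e1 = tail e2 -> Q e1 = Q e2.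
    by move=> e1 e2 h1 h2; apply: pr; rewrite mem_cat ?h1 ?h2 ?orbT.
  have [e1 e1d [h1 q1]] := IHd _ _ rd prd e ed.
  have [f fc hf] := rz_in rc.
  have [e2 e2c [h2 q2]] := IHc _ _ rc prc f fc.
  exists e2; first by rewrite mem_cat e2c.
  split=> //; rewrite q2 -q1; apply/pr; rewrite ?mem_cat ?e1d ?fc ?orbT //.
  by rewrite h1 hf.
- case=> [rc [rd _]] pr e; rewrite mem_cat => /orP [ec|ed].
    have prc : forall e1 e2, e1 \in leaves c -> e2 \in leaves c -> head e1 = tail e2 -> Q e1 = Q e2.
      by move=> e1 e2 h1 h2; apply: pr; rewrite mem_cat ?h1 ?h2.
    have [e1 e1c [h1 q1]] := IHc _ _ rc prc e ec.
    by exists e1; first by rewrite mem_cat e1c.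
  have prd : forall e1 e2, e1 \in leaves d -> e2 \in leaves d -> head e1 = tail e2 -> Q e1 = Q e2.
    by move=> e1 e2 h1 h2; apply: pr; rewrite mem_cat ?h1 ?h2 ?orbT.
  have [e2 e2d [h2 q2]] := IHd _ _ rd prd e ed.
  by exists e2; first by rewrite mem_cat e2d orbT.
Qed.


Definition sep (Y X : seq E) (x y : V) := forall e1 e2, e1 \in X -> e2 \in X ->
  head e1 = tail e2 -> head e1 <> x -> head e1 <> y -> (e1 \in Y) = (e2 \in Y).

Lemma Sconst c d x y (Y : seq E) : rz (SNode c d) x y ->
  sep Y (leaves c ++ leaves d) x y ->
  all (fun e => e \in Y) (leaves c ++ leaves d) \/ all (fun e => e \notin Y) (leaves c ++ leaves d).
Proof.
case=> m [rc [rd dj]] sp.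
have [e0 e0c h0] := rz_in rc; have [f0 f0d t0] := rz_out rd.
have mx : m <> x by move=> mx; apply: (rz_neq rc); rewrite mx.
have my : m <> y by apply: (rz_neq rd).
have [xc _] := rz_ends rc; have [_ yd] := rz_ends rd.
have inc e : e \in leaves c -> e \in leaves c ++ leaves d by rewrite mem_cat => ->.
have ind e : e \in leaves d -> e \in leaves c ++ leaves d by rewrite mem_cat => ->; rewrite orbT.
have e0b : (e0 \in Y) = (f0 \in Y).
  by apply: sp; [exact: inc|exact: ind|rewrite h0 t0|rewrite h0|rewrite h0].
have key : forall e, e \in leaves c ++ leaves d -> (e \in Y) = (f0 \in Y).
  move=> e; rewrite mem_cat => /orP [ec|ed].
    have [e' e'c [he' qe']] := chain_fwd (Q := fun e => e \in Y) rc
      (fun e1 e2 h1 h2 ht => sp e1 e2 (inc _ h1) (inc _ h2) ht (rz_noin rc h1)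
        (fun hy => my (esym (dj y (etrans (f_equal _ (esym hy)) (vsetH h1) : _) yd)))) ec.
    by rewrite -[in LHS]qe'; apply: sp; [exact: inc|exact: ind|rewrite he' t0|rewrite he'|rewrite he'].
  have prd : forall e1 e2, e1 \in leaves d -> e2 \in leaves d -> head e1 = tail e2 ->
      (e1 \in Y) = (e2 \in Y).
    move=> e1 e2 h1 h2 ht; apply: sp; [exact: ind|exact: ind|exact: ht| |].
      move=> hx; have hm : head e1 = m.
        by rewrite hx; apply: dj => //; rewrite -hx; apply: vsetH.
      exact: (rz_noin rd h1 hm).
    by rewrite ht; apply: (rz_noout rd h2).
  have [e' e'd [te' qe']] := chain_bwd (Q := fun e => e \in Y) rd prd ed.
  by rewrite -qe' -e0b; apply/esym/sp; [exact: inc|exact: ind|rewrite h0 te'|rewrite h0|rewrite h0].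
case Hb : (f0 \in Y); [left|right]; apply/allP => e He; by rewrite key ?Hb.
Qed.


Definition lo (o : option (sptree E)) := if o is Some t then leaves t else [::].
Definition Fo (o : option (sptree E)) := if o is Some t then F false t else 0.
Definition ro (o : option (sptree E)) x y := if o is Some t then rz t x y else True.
Definition optP (o1 o2 : option (sptree E)) :=
  match o1, o2 with
  | Some a, Some b => Some (PNode a b)
  | Some a, None => Some a
  | None, o => o
  end.

Lemma lo_optP o1 o2 : lo (optP o1 o2) = lo o1 ++ lo o2.
Proof. by case: o1 o2 => [a|] [b|] //=; rewrite cats0. Qed.

Lemma Fo_optP o1 o2 : Fo (optP o1 o2) = maxn (Fo o1) (Fo o2).
Proof. by case: o1 o2 => [a|] [b|] //=; rewrite ?maxn0 ?max0n. Qed.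

Lemma ro_optP o1 o2 x y : ro o1 x y -> ro o2 x y ->
  (forall p, p \in vset (lo o1) -> p \in vset (lo o2) -> p = x \/ p = y) ->
  ro (optP o1 o2) x y.
Proof. by case: o1 o2 => [a|] [b|] //= r1 r2 dj. Qed.

Lemma perm_sub1 (s1 s2 s : seq E) : perm_eq (s1 ++ s2) s -> {subset s1 <= s}.
Proof. by move=> /perm_mem H e es; rewrite -H mem_cat es. Qed.
Lemma perm_sub2 (s1 s2 s : seq E) : perm_eq (s1 ++ s2) s -> {subset s2 <= s}.
Proof. by move=> /perm_mem H e es; rewrite -H mem_cat es orbT. Qed.

Lemma sep_sub Y X X' x y : {subset X' <= X} -> sep Y X x y -> sep Y X' x y.
Proof. by move=> sub sp e1 e2 h1 h2; apply: sp; apply: sub. Qed.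

Definition psplit_res T x y (Y : seq E) oY oZ :=
  [/\ ro oY x y /\ ro oZ x y, perm_eq (lo oY ++ lo oZ) (leaves T),
   all (fun e => e \in Y) (lo oY) /\ all (fun e => e \notin Y) (lo oZ),
   (forall p, p \in vset (lo oY) -> p \in vset (lo oZ) -> p = x \/ p = y) &
   F false T = maxn (Fo oY) (Fo oZ)].

Lemma triv T x y Y : rz T x y ->
  all (fun e => e \in Y) (leaves T) \/ all (fun e => e \notin Y) (leaves T) ->
  exists oY oZ, psplit_res T x y Y oY oZ.
Proof.
move=> r [H|H].
  exists (Some T), None; split => //=; rewrite ?cats0 ?maxn0 //.
exists None, (Some T); split => //=; by rewrite max0n.
Qed.

Lemma Psplit T x y Y : rz T x y -> sep Y (leaves T) x y ->
  exists oY oZ, psplit_res T x y Y oY oZ.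
Proof.
elim: T x y => [e|c _ d _|c IHc d IHd] x y r sp.
- apply: triv => //=; case H : (e \in Y); [left|right]; by rewrite /= ?H.
- by apply: triv => //; apply: Sconst r sp.
case: r => rc [rd dj].
have sc : sep Y (leaves c) x y by apply: sep_sub sp => e ec /=; rewrite mem_cat ec.
have sd : sep Y (leaves d) x y by apply: sep_sub sp => e ed /=; rewrite mem_cat ed orbT.
have [cY [cZ [[rcY rcZ] pc [acY acZ] djc Fc]]] := IHc x y rc sc.
have [dY [dZ [[rdY rdZ] pd [adY adZ] djd Fd]]] := IHd x y rd sd.
have cd : forall p o1 o2, p \in vset (lo o1) -> p \in vset (lo o2) ->
    {subset lo o1 <= leaves c} -> {subset lo o2 <= leaves d} -> p = x \/ p = y.
  move=> p o1 o2 h1 h2 s1 s2; apply: dj.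
    by apply: vset_sub h1.
  by apply: vset_sub h2.
exists (optP cY dY), (optP cZ dZ); split.
- split; apply: ro_optP => // p h1 h2; apply: (cd p _ _ h1 h2).
  + exact: perm_sub1 pc.
  + exact: perm_sub1 pd.
  + exact: perm_sub2 pc.
  + exact: perm_sub2 pd.
- rewrite !lo_optP /= perm_catACA; exact: perm_cat.
- by rewrite !lo_optP !all_cat acY acZ adY adZ.
- move=> p; rewrite !lo_optP !vset_cat !mem_cat => /orP [h1|h1] /orP [h2|h2].
  + exact: djc.
  + apply: (cd p _ _ h1 h2); [exact: perm_sub1 pc|exact: perm_sub2 pd].
  + have := cd p _ _ h2 h1; apply; [exact: perm_sub2 pc|exact: perm_sub1 pd].
  + exact: djd.
- by rewrite /= !Fo_optP Fc Fd maxnACA.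
Qed.


Definition cut (X : seq E) z := forall e, e \in X -> reach X (head e) z || reach X z (tail e).

Lemma cut_eq X X' z : X =i X' -> cut X z -> cut X' z.
Proof.
move=> XX' ct e; rewrite -XX' => /ct.
by rewrite !(@reach_eq X X').
Qed.

Lemma Pcut c d x y z X : rz c x y -> rz d x y ->
  (forall p, p \in vset (leaves c) -> p \in vset (leaves d) -> p = x \/ p = y) ->
  X =i leaves c ++ leaves d -> cut X z -> z \in vset (leaves c) -> z <> x -> z <> y -> False.
Proof.
move=> rc rd dj XE ct zc zx zy.
have [f fd tf] := rz_out rd.
have fX : f \in X by rewrite XE mem_cat fd orbT.
case/orP: (ct f fX) => R.
  have : (fun p => (p \in vset (leaves d)) && (p != x)) z.
    apply: (reach_closed (S := fun p => (p \in vset (leaves d)) && (p != x)) _ _ R).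
      move=> e; rewrite XE mem_cat => /orP [ec|ed] /andP [td tx].
        have := dj (tail e) (vsetT ec) td; case=> H; first by rewrite H eqxx in tx.
        by case: (rz_noout rc ec H).
      by rewrite (vsetH ed) /=; apply/eqP; apply: (rz_noin rd ed).
    by rewrite /= (vsetH fd) /=; apply/eqP; apply: (rz_noin rd fd).
  by case/andP=> zd _; case: (dj z zc zd).
have : (fun p => p != x) x.
  rewrite tf in R; apply: (reach_closed (S := fun p => p != x) _ _ R); last by apply/eqP.
  move=> e; rewrite XE mem_cat => /orP [ec|ed] _; apply/eqP.
    exact: (rz_noin rc ec).
  exact: (rz_noin rd ed).
by rewrite /= eqxx.
Qed.

Lemma Ssplit T x y z : rz T x y -> cut (leaves T) z -> z \in vset (leaves T) ->
  z <> x -> z <> y ->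
  exists TL TR, [/\ rz TL x z, rz TR z y,
    (forall p, p \in vset (leaves TL) -> p \in vset (leaves TR) -> p = z),
    perm_eq (leaves TL ++ leaves TR) (leaves T) &
    F true T = maxn (F true TL) (F true TR)].
Proof.
elim: T x y z => [e|c IHc d IHd|c _ d _] x y z.
- case=> <- [<- _] _; rewrite /vset /= !inE => /orP [] /eqP -> //.
- case=> m [rc [rd dj]] ct; rewrite /= vset_cat mem_cat => zcd zx zy.
  have [xc _] := rz_ends rc; have [_ yd] := rz_ends rd.
  have [mc _] := rz_ends rd; have [_ md] := rz_ends rc.
  have [zm|zm] := eqVneq z m.
    subst z; exists c, d; split => //; exact: perm_refl.
  have zm' : z <> m by apply/eqP.
  case/orP: zcd => zc.
  +
    have zd : z \notin vset (leaves d).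
      by apply/negP => zd; apply: zm'; apply: dj.
    have ctc : cut (leaves c) z.
      move=> e ec; have eX : e \in leaves c ++ leaves d by rewrite mem_cat ec.
      have cl : forall e', e' \in leaves c ++ leaves d ->
          (fun p => p \in vset (leaves d)) (tail e') -> (fun p => p \in vset (leaves d)) (head e').
        move=> e'; rewrite mem_cat => /orP [e'c|e'd] /= td; last exact: vsetH.
        by case: (rz_noout rc e'c (dj _ (vsetT e'c) td)).
      have out : forall e', e' \in leaves c ++ leaves d ->
          ~~ (fun p => p \in vset (leaves d)) (tail e') -> e' \in leaves c.
        move=> e'; rewrite mem_cat => /orP [//|e'd] /=.
        by rewrite (vsetT e'd).
      have ted : tail e \notin vset (leaves d).
        by apply/negP => td; apply: (rz_noout rc ec); apply: dj => //; apply: vsetT.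
      case/orP: (ct e eX) => R; apply/orP; [left|right].
        exact: (reach_restr_out cl out zd R).
      exact: (reach_restr_out cl out ted R).
    have [cL [cR [rL rR djc pc Fc]]] := IHc x m z rc ctc zc zx zm'.
    have sR : {subset vset (leaves cR) <= vset (leaves c)}.
      by apply: vset_sub; apply: perm_sub2 pc.
    have sL : {subset vset (leaves cL) <= vset (leaves c)}.
      by apply: vset_sub; apply: perm_sub1 pc.
    exists cL, (SNode cR d); split => //.
    * exists m; split => //; split => // p pR pd; apply: dj => //; exact: sR.
    * move=> p pL; rewrite /= vset_cat mem_cat => /orP [pR|pd]; first exact: djc.
      have pm : p = m by apply: dj => //; exact: sL.
      subst p; apply: djc => //; by have [_ ] := rz_ends rR.
    * by rewrite /= catA; apply: perm_cat => //; apply: perm_refl.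
    * by rewrite /= !add0n Fc maxnA.
  +
    have ctd : cut (leaves d) z.
      move=> e ed; have eX : e \in leaves c ++ leaves d by rewrite mem_cat ed orbT.
      have cl : forall e', e' \in leaves c ++ leaves d ->
          (fun p => p \in vset (leaves d)) (tail e') ->
          (fun p => p \in vset (leaves d)) (head e') /\ e' \in leaves d.
        move=> e'; rewrite mem_cat => /orP [e'c|e'd] /= td; last by rewrite (vsetH e'd).
        by case: (rz_noout rc e'c (dj _ (vsetT e'c) td)).
      case/orP: (ct e eX) => R; apply/orP; [left|right].
        exact: (reach_restr_in cl (vsetH ed) R).
      exact: (reach_restr_in cl zc R).
    have [dL [dR [rL rR djd pd Fd]]] := IHd m y z rd ctd zc zm' zy.
    have sR : {subset vset (leaves dR) <= vset (leaves d)}.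
      by apply: vset_sub; apply: perm_sub2 pd.
    have sL : {subset vset (leaves dL) <= vset (leaves d)}.
      by apply: vset_sub; apply: perm_sub1 pd.
    exists (SNode c dL), dR; split => //.
    * exists m; split => //; split => // p pc pL; apply: dj => //; exact: sL.
    * move=> p; rewrite /= vset_cat mem_cat => /orP [pc|pL] pR; last exact: djd.
      have pm : p = m by apply: dj => //; exact: sR.
      subst p; apply: djd => //; by have [] := rz_ends rL.
    * by rewrite /= -catA; apply: perm_cat => //; apply: perm_refl.
    * by rewrite /= !add0n Fd maxnA.
- case=> rc [rd dj] ct; rewrite /= vset_cat mem_cat => /orP [zc|zd] zx zy.
    by case: (Pcut rc rd dj (fun e => erefl) ct zc zx zy).
  have dj' : forall p, p \in vset (leaves d) -> p \in vset (leaves c) -> p = x \/ p = y.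
    by move=> p h1 h2; apply: dj.
  have XE : leaves c ++ leaves d =i leaves d ++ leaves c by move=> e; rewrite !mem_cat orbC.
  by case: (Pcut rd rc dj' XE ct zd zx zy).
Qed.


Lemma charS L R X x w y e : rz L x w -> rz R w y ->
  (forall p, p \in vset (leaves L) -> p \in vset (leaves R) -> p = w) ->
  X =i leaves L ++ leaves R -> e \in X -> (e \in leaves L) = reach X (head e) w.
Proof.
move=> rL rR dj XE eX; apply/idP/idP => [eL|Rh].
  apply: (reach_sub _ (rz_reach_sink rL eL)) => f fL; by rewrite XE mem_cat fL.
apply/negPn/negP => eL.
have eR : e \in leaves R by move: eX; rewrite XE mem_cat (negbTE eL).
have : (fun p => (p \in vset (leaves R)) && (p != w)) w.
  apply: (reach_closed (S := fun p => (p \in vset (leaves R)) && (p != w)) _ _ Rh).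
    move=> f; rewrite XE mem_cat => /orP [fL|fR] /andP [tR tw].
      by rewrite (dj _ (vsetT fL) tR) eqxx in tw.
    by rewrite (vsetH fR) /=; apply/eqP; apply: (rz_noin rR fR).
  by rewrite /= (vsetH eR) /=; apply/eqP; apply: (rz_noin rR eR).
by rewrite /= eqxx andbF.
Qed.

Lemma sepP a b x y X : rz (PNode a b) x y -> X =i leaves a ++ leaves b ->
  sep (leaves a) X x y.
Proof.
case=> ra [rb dj] XE e1 e2; rewrite !XE !mem_cat => h1 h2 ht hx hy.
case: (boolP (e1 \in leaves a)) => [e1a|e1a]; case: (boolP (e2 \in leaves a)) => [e2a|e2a] //.
  have e2b : e2 \in leaves b by move: h2; rewrite (negbTE e2a).
  by case: (dj (head e1) (vsetH e1a) (etrans (f_equal _ ht) (vsetT e2b) : _)).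
have e1b : e1 \in leaves b by move: h1; rewrite (negbTE e1a).
by case: (dj (head e1) (etrans (f_equal _ ht) (vsetT e2a) : _) (vsetH e1b)).
Qed.

Lemma uniq_mem2 (s1 s2 : seq E) e : uniq (s1 ++ s2) ->
  (e \in s2) = (e \in s1 ++ s2) && (e \notin s1).
Proof.
rewrite cat_uniq mem_cat => /and3P [_ H _].
case: (boolP (e \in s1)) => h //=; last by rewrite andbT.
apply/negbTE; apply: contra H => h2; apply/hasP; by exists e.
Qed.

Lemma SPex a1 b1 a2 b2 u v : rz (SNode a1 b1) u v -> rz (PNode a2 b2) u v ->
  uniq (leaves a2 ++ leaves b2) -> leaves a1 ++ leaves b1 =i leaves a2 ++ leaves b2 -> False.
Proof.
move=> r1 r2 un XE.
have sp := sepP r2 XE.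
have [ra [rb _]] := r2.
have [ea eaa _] := rz_out ra; have [eb ebb _] := rz_out rb.
have eaX : ea \in leaves a1 ++ leaves b1 by rewrite XE mem_cat eaa.
have ebX : eb \in leaves a1 ++ leaves b1 by rewrite XE mem_cat ebb orbT.
have eba : eb \notin leaves a2 by move: (uniq_mem2 eb un); rewrite ebb => /esym /andP [].
case: (Sconst r1 sp) => /allP H.
  by move: (H eb ebX); rewrite (negbTE eba).
by move: (H ea eaX); rewrite eaa.
Qed.


Definition IHn n := forall T1 T2 u v, size (leaves T1) <= n -> uniq (leaves T1) ->
  uniq (leaves T2) -> leaves T1 =i leaves T2 -> rz T1 u v -> rz T2 u v ->
  F false T1 = F false T2 /\ F true T1 = F true T2.


Lemma eq_mem_cases (A B X : seq E) : {subset A <= X} -> {subset B <= X} ->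
  (forall e, e \in X -> (e \in A) = (e \in B)) -> A =i B.
Proof.
move=> sA sB H e; case: (boolP (e \in X)) => eX; first exact: H.
by rewrite (contraNF (@sA e) eX) (contraNF (@sB e) eX).
Qed.

Lemma SScase n T1 a2 b2 u v : IHn n -> size (leaves T1) <= n.+1 -> uniq (leaves T1) ->
  uniq (leaves a2 ++ leaves b2) -> leaves T1 =i leaves a2 ++ leaves b2 ->
  rz T1 u v -> rz (SNode a2 b2) u v -> F true T1 = F true (SNode a2 b2).
Proof.
move=> IH sz u1 u2 XE r1 [w [ra [rb dj2]]].
have ct : cut (leaves T1) w.
  move=> e; rewrite XE mem_cat => /orP [ea|eb]; apply/orP; [left|right].
    apply: (reach_sub _ (rz_reach_sink ra ea)) => f fa; by rewrite XE mem_cat fa.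
  apply: (reach_sub _ (rz_reach_src rb eb)) => f fb; by rewrite XE mem_cat fb orbT.
have wX : w \in vset (leaves T1).
  have [_ wa] := rz_ends ra.
  by apply: (vset_sub _ wa) => f fa; rewrite XE mem_cat fa.
have wu : w <> u by move=> wu; apply: (rz_neq ra); rewrite wu.
have wv : w <> v by apply: (rz_neq rb).
have [TL [TR [rL rR djLR pLR FT]]] := Ssplit r1 ct wX wu wv.
have XE' : leaves T1 =i leaves TL ++ leaves TR by move=> e; rewrite (perm_mem pLR).
have uLR : uniq (leaves TL ++ leaves TR) by rewrite (perm_uniq pLR).
have Ha : leaves TL =i leaves a2.
  apply: (eq_mem_cases (X := leaves T1)).
  - exact: perm_sub1 pLR.
  - by move=> f fa; rewrite XE mem_cat fa.
  - move=> e eX; rewrite (charS rL rR djLR XE' eX).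
    by rewrite (charS ra rb dj2 XE eX).
have Hb : leaves TR =i leaves b2.
  move=> e; rewrite (uniq_mem2 e uLR) (uniq_mem2 e u2) Ha.
  by rewrite -XE' -XE.
move: uLR; rewrite cat_uniq => /and3P [uL _ uR].
move: u2; rewrite cat_uniq => /and3P [ua _ ub].
have sLR := perm_size pLR; rewrite size_cat in sLR.
have sL0 := size_leaves TL; have sR0 := size_leaves TR.
have szL : size (leaves TL) <= n.
  by rewrite -ltnS; apply: leq_trans sz; rewrite -sLR -{1}[size (leaves TL)]addn0 ltn_add2l.
have szR : size (leaves TR) <= n.
  by rewrite -ltnS; apply: leq_trans sz; rewrite -sLR -{1}[size (leaves TR)]add0n ltn_add2r.
have [_ FL] := IH TL a2 u w szL uL ua Ha rL ra.
have [_ FR] := IH TR b2 w v szR uR ub Hb rR rb.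
by rewrite FT FL FR /= add0n.
Qed.


Lemma PPcase n T1 a2 b2 u v : IHn n -> size (leaves T1) <= n.+1 -> uniq (leaves T1) ->
  uniq (leaves a2 ++ leaves b2) -> leaves T1 =i leaves a2 ++ leaves b2 ->
  rz T1 u v -> rz (PNode a2 b2) u v -> F false T1 = F false (PNode a2 b2).
Proof.
move=> IH sz u1 u2 XE r1 r2.
have sp := sepP r2 XE.
have [ra [rb _]] := r2.
have [oY [oZ [[rY rZ] pYZ [aY aZ] _ FT]]] := Psplit r1 sp.
have [ea eaa _] := rz_out ra; have [eb ebb _] := rz_out rb.
have eaX : ea \in leaves T1 by rewrite XE mem_cat eaa.
have ebX : eb \in leaves T1 by rewrite XE mem_cat ebb orbT.
have eba : eb \notin leaves a2 by move: (uniq_mem2 eb u2); rewrite ebb => /esym /andP [].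
have XE' : leaves T1 =i lo oY ++ lo oZ by move=> e; rewrite (perm_mem pYZ).
have notZ : forall e, e \in leaves a2 -> e \notin lo oZ.
  by move=> e ea2; apply/negP => eZ; move/allP: aZ => /(_ e eZ); rewrite ea2.
have notY : forall e, e \notin leaves a2 -> e \notin lo oY.
  by move=> e ea2; apply/negP => eY; move/allP: aY => /(_ e eY) => h; rewrite h in ea2.
case: oY rY pYZ aY FT XE' notY => [TY|] rY pYZ aY FT XE' notY; last first.
  by move: eaX; rewrite XE' /= (negbTE (notZ _ eaa)).
case: oZ rZ pYZ aZ FT XE' notZ => [TZ|] rZ pYZ aZ FT XE' notZ; last first.
  by move: ebX; rewrite XE' /= cats0 (negbTE (notY _ eba)).
rewrite /= in rY rZ pYZ aY aZ FT XE' notY notZ.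
have Ha : leaves TY =i leaves a2.
  move=> e; apply/idP/idP => h; first by move/allP: aY => /(_ e h).
  have : e \in leaves T1 by rewrite XE mem_cat h.
  by rewrite XE' mem_cat (negbTE (notZ _ h)) orbF.
have uYZ : uniq (leaves TY ++ leaves TZ) by rewrite (perm_uniq pYZ).
have Hb : leaves TZ =i leaves b2.
  move=> e; rewrite (uniq_mem2 e uYZ) (uniq_mem2 e u2) Ha.
  by rewrite -XE' -XE.
move: uYZ; rewrite cat_uniq => /and3P [uL _ uR].
move: u2; rewrite cat_uniq => /and3P [ua _ ub].
have sLR := perm_size pYZ; rewrite size_cat in sLR.
have sL0 := size_leaves TY; have sR0 := size_leaves TZ.
have szL : size (leaves TY) <= n.
  by rewrite -ltnS; apply: leq_trans sz; rewrite -sLR -{1}[size (leaves TY)]addn0 ltn_add2l.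
have szR : size (leaves TZ) <= n.
  by rewrite -ltnS; apply: leq_trans sz; rewrite -sLR -{1}[size (leaves TZ)]add0n ltn_add2r.
have [FL _] := IH TY a2 u v szL uL ua Ha rY ra.
have [FR _] := IH TZ b2 u v szR uR ub Hb rZ rb.
by rewrite FT FL FR.
Qed.


Lemma mainF n : IHn n.
Proof.
elim: n => [|n IH] T1 T2 u v sz u1 u2 XE r1 r2.
  by move: (size_leaves T1); rewrite leqNgt in sz; rewrite (negbTE sz).
have sz2 : size (leaves T1) = size (leaves T2) by apply: perm_size; apply: uniq_perm.
case: T2 r2 u2 XE sz2 => [e2|a2 b2|a2 b2] r2 u2 XE sz2;
case: T1 r1 u1 XE sz sz2 => [e1|a1 b1|a1 b1] r1 u1 XE sz sz2 //=.
- move: sz2 (size_leaves a1) (size_leaves b1); rewrite /= size_cat. by move=> H h1 h2; have := leq_add h1 h2; rewrite H.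
- by move: sz2 (size_leaves a1) (size_leaves b1); rewrite /= size_cat; by move=> H h1 h2; have := leq_add h1 h2; rewrite H.
- move: sz2 (size_leaves a2) (size_leaves b2); rewrite /= size_cat; by move=> H h1 h2; have := leq_add h1 h2; rewrite -H.
- have := SScase IH sz u1 u2 XE r1 r2; rewrite /= !add0n => ->; split => //.
- by case: (SPex r2 r1 u1 (fun e => esym (XE e))).
- move: sz2 (size_leaves a2) (size_leaves b2); rewrite /= size_cat; by move=> H h1 h2; have := leq_add h1 h2; rewrite -H.
- by case: (SPex r1 r2 u2 XE).
- have := PPcase IH sz u1 u2 XE r1 r2; rewrite /= => ->; split => //.
Qed.

End Aux.

Theorem mainTheorem11 (V E : finType) (tail head : E -> V) (s t : V)
    (T1 T2 : sptree E) :
  is_dtree tail head s t T1 -> is_dtree tail head s t T2 -> phi T1 = phi T2.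
Proof.
case=> p1 [r1 _] [p2 [r2 _]].
have u1 : uniq (leaves T1) by rewrite (perm_uniq p1) enum_uniq.
have u2 : uniq (leaves T2) by rewrite (perm_uniq p2) enum_uniq.
have XE : leaves T1 =i leaves T2 by move=> e; rewrite (perm_mem p1) (perm_mem p2).
have [H _] := mainF (leqnn _) u1 u2 XE r1 r2.
by rewrite /phi /ncomp !phiF.
Qed.
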